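(* For all $n\ge 4$, $|F_n(321,1423,3124)|=F_n+2$, where $F_n$ is the $n$-th Fibonacci number with $F_0=F_1=1$ and $F_n=F_{n-1}+F_{n-2}$ for $n\ge 2$.
   Context: A permutation $\pi$ avoids a classical pattern $p\in S_k$ if no subsequence of $\pi$ of length $k$ is order-isomorphic to $p$. A Fishburn permutation is a permutation $\pi=\pi_1\cdots\pi_n$ of $[n]$ for which there are no indices $i<j$ with $\pi_j<\pi_i<\pi_{i+1}$ and $\pi_i=\pi_j+1$. $F_n(\sigma_1,\dots,\sigma_k)$ denotes the set of Fishburn permutations of length $n$ avoiding each of the classical patterns $\sigma_1,\dots,\sigma_k$. *)

(* Defs.v *)
From mathcomp Require Import all_boot all_order all_fingroup.
Set Implicit Arguments. Unset Strict Implicit. Unset Printing Implicit Defensive.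

(* Permutations of [n] are represented as s : 'S_n, i.e. bijections of
   'I_n = {0,..,n-1}; position i (0-based) carries value s i (0-based),
   i.e. pi_{i+1} = s i + 1.  Shifting by 1 preserves all order relations. *)

(* A classical pattern p of length k is given as a sequence of its entries
   (1-based, e.g. [:: 3; 2; 1]).  s contains p iff there is a strictly
   increasing choice of k positions whose values are order-isomorphic to p. *)
Definition contains_pattern n (s : 'S_n) (p : seq nat) : bool :=
  [exists f : {ffun 'I_(size p) -> 'I_n},
     [forall a : 'I_(size p), forall b : 'I_(size p),
        ((a < b)%N ==> (f a < f b)%N) &&
        ((s (f a) < s (f b))%N == (nth 0 p a < nth 0 p b)%N)]].

Definition avoids n (s : 'S_n) (p : seq nat) : bool := ~~ contains_pattern s p.

Definition fishburn n (s : 'S_n) : bool :=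
  ~~ [exists i : 'I_n, exists j : 'I_n,
       [&& (i < j)%N, (i.+1 < n)%N,
           (s j < s i)%N,
           (s i < nth 0 [seq val (s k) | k <- enum 'I_n] i.+1)%N &
           (val (s i) == (s j).+1)]].

Definition Fish_avoid n (pats : seq (seq nat)) : {set 'S_n} :=
  [set s : 'S_n | fishburn s && all (avoids s) pats].

Fixpoint fib (n : nat) : nat :=
  match n with
  | 0 => 1
  | 1 => 1
  | (m.+1 as k).+1 => fib k + fib m
  end.

(* Main.v *)
Require Import Defs.
From mathcomp Require Import all_boot all_order all_fingroup.
From mathcomp Require Import zify.
Set Implicit Arguments. Unset Strict Implicit. Unset Printing Implicit Defensive.

Definition inj_on n (p : nat -> nat) := forall i j, i < n -> j < n -> p i = p j -> i = j.
Definition range n (p : nat -> nat) := forall i, i < n -> p i < n.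
Definition surj n (p : nat -> nat) := forall v, v < n -> exists2 i, i < n & p i = v.
Definition c321 n (p : nat -> nat) := exists i j k, [/\ i < j, j < k, k < n, p k < p j & p j < p i].
Definition c1423 n (p : nat -> nat) := exists i j k l,
  [/\ i < j, j < k, k < l, l < n & [/\ p i < p k, p k < p l & p l < p j]].
Definition c3124 n (p : nat -> nat) := exists i j k l,
  [/\ i < j, j < k, k < l, l < n & [/\ p j < p k, p k < p i & p i < p l]].
Definition fviol n (p : nat -> nat) := exists i j,
  [/\ i < j, j < n, i.+1 < n, p j < p i & p i < p i.+1 /\ p i = (p j).+1].
Definition good n p := inj_on n p /\ range n p /\ surj n p /\ ~ fviol n p /\
  ~ c321 n p /\ ~ c1423 n p /\ ~ c3124 n p.
Definition Q n (p : nat -> nat) i :=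
  (forall t, t < n -> (t < i) = (p t < i)) /\ (forall t, t < i -> p t <= t.+1 /\ t <= (p t).+1).

Lemma stepQ n p i : good n p -> i < n -> Q n p i -> p i <= i.+1 ->
  Q n p i.+1 \/ (i.+2 <= n /\ Q n p i.+2).
Proof.
case=> Hinj [Hr [Hs [Hf _]]] Hin [HB HL] Hpi.
have Hge : i <= p i by have := HB i Hin; lia.
have Hpin := Hr i Hin.
have [Hc|Hc] : p i = i \/ p i = i.+1 by lia.
- left; split.
  + move=> t Ht; have := HB t Ht.
    case: (ltngtP t i) => [Hti|Hti|->]; last by rewrite Hc; lia.
    * lia.
    * have : p t <> p i by move=> E; have := Hinj _ _ Ht Hin E; lia.
      lia.
  + move=> t Ht; case: (ltngtP t i) => [Hti|Hti|->]; [exact: HL| lia | lia].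
- have Hi1 : i.+1 < n by lia.
  have Hd := HB i.+1 Hi1.
  have Hne : p i.+1 <> p i by move=> E; have := Hinj _ _ Hi1 Hin E; lia.
  have [Hdi|Hdi] : p i.+1 = i \/ i.+1 < p i.+1 by lia.
  + right; split; first lia.
    split.
    * move=> t Ht; have := HB t Ht.
      case: (ltngtP t i) => [Hti|Hti|->]; last by lia.
      -- lia.
      -- case: (ltngtP t i.+1) => [Hti2|Hti2|->]; first lia; last by lia.
         have : p t <> p i by move=> E; have := Hinj _ _ Ht Hin E; lia.
         have : p t <> p i.+1 by move=> E; have := Hinj _ _ Ht Hi1 E; lia.
         lia.
    * move=> t Ht; case: (ltngtP t i) => [Hti|Hti|->]; [exact: HL| | lia].
      have -> : t = i.+1 by lia.
      lia.
  + exfalso; apply: Hf.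
    have [j Hj Hpj] := Hs i Hin.
    have Hji : i < j.
      have := HB j Hj; case: (ltngtP j i) => [Hji|Hji|Hji]; [lia|lia|].
      by subst j; lia.
    by exists i, j; split; lia.
Qed.

Lemma boundQ n p i : good n p -> 0 < i -> i < n -> Q n p i -> p i <= i.+1.
Proof.
case=> Hinj [Hr [Hs [Hf [H3 [H14 H31]]]]] Hi0 Hin [HB HL].
have Hge : i <= p i by have := HB i Hin; lia.
rewrite leqNgt; apply/negP => Hc.
have Hpin := Hr i Hin.
have [a Ha Hpa] := Hs i Hin.
have [b Hb Hpb] : exists2 b, b < n & p b = i.+1 by apply: Hs; lia.
have Hai : i < a.
  have := HB a Ha; case: (ltngtP a i) => [|//|E]; first lia.
  by subst a; lia.
have Hbi : i < b.
  have := HB b Hb; case: (ltngtP b i) => [|//|E]; first lia.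
  by subst b; lia.
have H0 := HB 0 (ltn_trans Hi0 Hin).
case: (ltngtP a b) => [Hab|Hab|E]; last by subst; lia.
- apply: H14; exists 0, i, a, b; (repeat split); lia.
- apply: H3; exists i, b, a; (repeat split); lia.
Qed.

Lemma spec1 n p : good n p -> 1 < n -> 2 <= p 0 -> p 1 = 0.
Proof.
case=> Hinj [Hr [Hs [Hf [H3 [H14 H31]]]]] Hn Hc.
have Hn0 : 0 < n by lia.
have Hp0 := Hr 0 Hn0.
have Hp1 := Hr 1 Hn.
have Hne : p 1 <> p 0 by move=> E; have := Hinj _ _ Hn Hn0 E.
case: (ltngtP (p 1) (p 0)) => [Hlt|Hgt|//].
- have [q Hq Hpq] := Hs 0 Hn0.
  case: (posnP (p 1)) => // Hd.
  have Hq1 : 1 < q.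
    case: q Hq Hpq => [|[|q]] Hq Hpq; try lia.
  exfalso; apply: H3; exists 0, 1, q; (repeat split); lia.
- exfalso; apply: Hf.
  have [j Hj Hpj] : exists2 j, j < n & p j = (p 0).-1 by apply: Hs; lia.
  have Hj0 : 0 < j by case: j Hj Hpj => [|j] //= _; lia.
  exists 0, j; (repeat split); lia.
Qed.

Lemma spec2 n p : good n p -> 1 < n -> 2 <= p 0 -> p 0 = 2 \/ p 0 = n.-1.
Proof.
move=> G Hn Hc; have H1 := spec1 G Hn Hc.
case: G => Hinj [Hr [Hs [Hf [H3 [H14 H31]]]]].
have Hn0 : 0 < n by lia.
have Hp0 := Hr 0 Hn0.
case: (ltngtP (p 0) 2) => [|Hc3|]; [lia| |by left].
case: (ltngtP (p 0) n.-1) => [Hcn||]; [|lia|by right].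
exfalso.
have [a Ha Hpa] : exists2 a, a < n & p a = n.-1 by apply: Hs; lia.
have [b1 Hb1 Hpb1] : exists2 a, a < n & p a = 1 by apply: Hs; lia.
have [b2 Hb2 Hpb2] : exists2 a, a < n & p a = 2 by apply: Hs; lia.
have Hnot01 : forall x, x < n -> p x <> 0 -> p x <> p 0 -> 1 < x.
  by move=> [|[|x]] //; rewrite ?H1.
have Ha1 := Hnot01 a Ha ltac:(lia) ltac:(lia).
have Hb11 := Hnot01 b1 Hb1 ltac:(lia) ltac:(lia).
have Hb21 := Hnot01 b2 Hb2 ltac:(lia) ltac:(lia).
have Hb12 : b1 < b2.
  case: (ltngtP b1 b2) => [//|Hlt|E]; last by subst; lia.
  by exfalso; apply: H3; exists 0, b2, b1; (repeat split); lia.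
have Hab : a < b1.
  case: (ltngtP a b1) => [//|Hlt|E]; last by subst; lia.
  by exfalso; apply: H31; exists 0, 1, b1, a; (repeat split); lia.
by apply: H14; exists 1, a, b1, b2; (repeat split); lia.
Qed.

Lemma spec_c1 n p : good n p -> 2 < n -> p 0 = n.-1 ->
  forall t, 0 < t < n -> p t = t.-1.
Proof.
move=> G Hn Hc; have H1 := spec1 G ltac:(lia) ltac:(lia).
case: G => Hinj [Hr [Hs [Hf [H3 [H14 H31]]]]].
have Hn0 : 0 < n by lia.
suff : forall t, 0 < t < n -> forall t', 0 < t' <= t -> p t' = t'.-1.
  by move=> H t Ht; apply: (H t Ht); lia.
elim=> [|t IH] // Ht.
case: (posnP t) => [->|Ht0] t' Ht'.
  by have -> : t' = 1 by lia.
have IH' := IH ltac:(lia).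
case: (ltngtP t' t.+1) => [Hlt|Hgt|->]; first by apply: IH'; lia.
  lia.
have Hv := Hr t.+1 ltac:(lia).
have Hne0 : p t.+1 <> p 0 by move=> E; have := Hinj t.+1 0 ltac:(lia) Hn0 E.
have Hge : t <= p t.+1.
  rewrite leqNgt; apply/negP => Hlt.
  have E : p t.+1 = p (p t.+1).+1 by rewrite [p (p t.+1).+1]IH' //; lia.
  have := Hinj t.+1 (p t.+1).+1 ltac:(lia) ltac:(lia) E; lia.
case: (ltngtP (p t.+1) t) => [|Hgt|//]; first lia.
exfalso.
have [q Hq Hpq] : exists2 q, q < n & p q = t by apply: Hs; lia.
have Hqt1 : q <> t.+1 by move=> E; rewrite E in Hpq; lia.
have Hqt2 : ~ q < t.+1.
  move=> Hlt; case: (posnP q) => [E|Hq0]; first by rewrite E in Hpq; lia.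
  rewrite IH' in Hpq; lia.
have Hqt : t.+1 < q by lia.
by apply: H3; exists 0, t.+1, q; (repeat split); lia.
Qed.

Lemma spec_c2a n p : good n p -> 3 < n -> p 0 = 2 ->
  forall t, 1 < t < n.-1 -> p t = t.+1.
Proof.
move=> G Hn Hc; have H1 := spec1 G ltac:(lia) ltac:(lia).
case: G => Hinj [Hr [Hs [Hf [H3 [H14 H31]]]]].
have Hn0 : 0 < n by lia.
suff : forall t, t < n.-1 -> forall t', 1 < t' <= t -> p t' = t'.+1.
  by move=> H t Ht; apply: (H t); lia.
elim=> [|t IH] Ht t' Ht'; first lia.
have IH' := IH ltac:(lia).
case: (ltngtP t' t.+1) => [Hlt|Hgt|->]; first by apply: IH'; lia.
  lia.
have Htn : t.+1 < n by lia.
have Hv := Hr t.+1 Htn.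
have Hne0 : p t.+1 <> p 0 by move=> E; have := Hinj t.+1 0 Htn Hn0 E.
have Hne1 : p t.+1 <> p 1 by move=> E; have := Hinj t.+1 1 Htn ltac:(lia) E; lia.
have Hnemid : forall u, 1 < u <= t -> p t.+1 <> u.+1.
  move=> u Hu E; rewrite -[u.+1]IH' // in E; have := Hinj t.+1 u Htn ltac:(lia) E; lia.
have [q Hq Hpq] : exists2 q, q < n & p q = t.+2 by apply: Hs; lia.
have Hqt : t.+1 <= q.
  rewrite leqNgt; apply/negP => Hlt.
  case: q Hq Hpq Hlt => [|[|q]] Hq Hpq Hlt; [lia|lia|].
  rewrite IH' in Hpq; lia.
case: (ltngtP (p t.+1) t.+2) => [Hlt|Hgt|//].
- have E : p t.+1 = 1.
    case: (p t.+1) Hlt Hne0 Hne1 Hnemid => [|[|[|v]]] //; rewrite ?Hc ?H1 //.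
    move=> Hlt _ _ Hm; exfalso; apply: (Hm v.+2); lia.
  have Hqt' : t.+1 < q by case: (ltngtP q t.+1) Hqt => //; move=> E'; rewrite E' in Hpq; lia.
  by exfalso; apply: H31; exists 0, 1, t.+1, q; (repeat split); lia.
- have Hqt' : t.+1 < q by case: (ltngtP q t.+1) Hqt => //; move=> E'; rewrite E' in Hpq; lia.
  have [r Hr' Hpr] : exists2 r, r < n & p r = 1 by apply: Hs; lia.
  have Hrt : t.+1 < r.
    rewrite ltnNge; apply/negP => Hle.
    case: r Hr' Hpr Hle => [|[|r]] Hr' Hpr Hle; [lia|lia|].
    case: (ltngtP r.+2 t.+1) => [Hlt2|Hgt2|E2]; [|lia|].
    + rewrite IH' in Hpr; lia.
    + rewrite E2 in Hpr; lia.
  exfalso; case: (ltngtP q r) => [Hqr|Hrq|E]; last by rewrite E in Hpq; lia.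
  + by apply: H3; exists t.+1, q, r; (repeat split); lia.
  + by apply: H31; exists 0, 1, r, q; (repeat split); lia.
Qed.

Lemma spec_c2b n p : good n p -> 3 < n -> p 0 = 2 -> p n.-1 = 1.
Proof.
move=> G Hn Hc; have Hmid := spec_c2a G Hn Hc.
have H1 := spec1 G ltac:(lia) ltac:(lia).
case: G => Hinj [Hr [Hs [Hf [H3 [H14 H31]]]]].
have Hl : n.-1 < n by lia.
have Hv := Hr _ Hl.
have Hne0 : p n.-1 <> p 0 by move=> E; have := Hinj _ 0 Hl ltac:(lia) E; lia.
have Hne1 : p n.-1 <> p 1 by move=> E; have := Hinj _ 1 Hl ltac:(lia) E; lia.
have Hnemid : forall u, 1 < u < n.-1 -> p n.-1 <> u.+1.
  move=> u Hu E; rewrite -[u.+1]Hmid // in E; have := Hinj _ u Hl ltac:(lia) E; lia.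
move: Hv Hne0 Hne1 Hnemid; rewrite Hc H1.
case: (p n.-1) => [|[|[|v]]] //.
move=> Hv _ _ Hm; exfalso; apply: (Hm v.+2); lia.
Qed.

Definition layered n (p : nat -> nat) := forall t, t < n -> p t <= t.+1 /\ t <= (p t).+1.
Definition c1f n t := if t == 0 then n.-1 else t.-1.
Definition c2f n t := if t == 0 then 2 else if t == 1 then 0 else if t == n.-1 then 1 else t.+1.

Lemma iterQ n p : good n p -> forall m i, n - i <= m -> 0 < i <= n -> Q n p i -> Q n p n.
Proof.
move=> G; elim=> [|m IH] i Hm Hi HQ.
  have E : n = i by lia.
  by rewrite -E in HQ.
have [E|Hlt] : i = n \/ i < n by lia.
  by rewrite E in HQ.
have Hi0 : 0 < i by lia.
have [H|[Hle H]] := stepQ G Hlt HQ (boundQ G Hi0 Hlt HQ); apply: (IH _ _ _ H); lia.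
Qed.

Lemma charA n p : good n p -> 3 < n ->
  layered n p \/ (forall t, t < n -> p t = c1f n t) \/ (forall t, t < n -> p t = c2f n t).
Proof.
move=> G Hn.
have Hn0 : 0 < n by lia.
case: (leqP (p 0) 1) => Hp0.
  left.
  have HQ0 : Q n p 0 by split => // t Ht; lia.
  have HQn : Q n p n.
    have := stepQ G Hn0 HQ0 Hp0.
    case=> [H|[Hle H]]; apply: (iterQ G (m := n) _ _ H); lia.
  by move=> t Ht; apply: HQn.2.
right.
case: (spec2 G ltac:(lia) Hp0) => Hc.
  right => t Ht; rewrite /c2f.
  case: (eqVneq t 0) => [->//|H0].
  case: (eqVneq t 1) => [->|H1]; first by apply: (spec1 G); lia.
  case: (eqVneq t n.-1) => [->|H2]; first by apply: (spec_c2b G); lia.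
  apply: (spec_c2a G) => //; lia.
left => t Ht; rewrite /c1f.
case: (eqVneq t 0) => [->//|H0].
apply: (spec_c1 G) => //; lia.
Qed.

Lemma layered_inv n p i k : layered n p -> i < k -> k < n -> p k < p i -> k = i.+1.
Proof. move=> L Hik Hk Hp; have := L i ltac:(lia); have := L k Hk; lia. Qed.

Lemma layered_ok n p : layered n p ->
  ~ fviol n p /\ ~ c321 n p /\ ~ c1423 n p /\ ~ c3124 n p.
Proof.
move=> L; split; [|split; [|split]].
- case=> i [j [Hij Hj Hi1 Hpj [Hpi _]]].
  have := layered_inv L Hij Hj Hpj => E; subst j; lia.
- case=> i [j [k [Hij Hjk Hk Hkj Hji]]].
  have := layered_inv L (ltn_trans Hij Hjk) Hk ltac:(lia); lia.
- case=> i [j [k [l [Hij Hjk Hkl Hl [H1 H2 H3]]]]].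
  have := layered_inv L Hjk ltac:(lia) ltac:(lia).
  have := layered_inv L (ltn_trans Hjk Hkl) Hl ltac:(lia); lia.
- case=> i [j [k [l [Hij Hjk Hkl Hl [H1 H2 H3]]]]].
  have := layered_inv L Hij ltac:(lia) ltac:(lia).
  have := layered_inv L (ltn_trans Hij Hjk) ltac:(lia) ltac:(lia); lia.
Qed.

Lemma c1f_inv n i k : i < k -> k < n -> c1f n k < c1f n i -> i = 0.
Proof. rewrite /c1f; repeat (case: eqP => ?); lia. Qed.

Lemma c1f_ok n : 3 < n ->
  ~ fviol n (c1f n) /\ ~ c321 n (c1f n) /\ ~ c1423 n (c1f n) /\ ~ c3124 n (c1f n).
Proof.
move=> Hn; split; [|split; [|split]].
- case=> i [j [Hij Hj Hi1 Hpj [Hpi _]]].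
  have := c1f_inv Hij Hj Hpj => E; subst i; move: Hpi; rewrite /c1f /=; lia.
- case=> i [j [k [Hij Hjk Hk Hkj Hji]]].
  have := c1f_inv Hjk Hk Hkj; lia.
- case=> i [j [k [l [Hij Hjk Hkl Hl [H1 H2 H3]]]]].
  have := c1f_inv (ltn_trans Hjk Hkl) Hl H3; lia.
- case=> i [j [k [l [Hij Hjk Hkl Hl [H1 H2 H3]]]]].
  have := c1f_inv (n:=n) Hij ltac:(lia) ltac:(lia) => E; subst i.
  move: H3; rewrite /c1f /=; case: eqP => ?; lia.
Qed.

Lemma c2f_inv n i k : 3 < n -> i < k -> k < n -> c2f n k < c2f n i -> k = 1 \/ k = n.-1.
Proof. rewrite /c2f; repeat (case: eqP => ?); lia. Qed.

Lemma c2f_ok n : 3 < n ->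
  ~ fviol n (c2f n) /\ ~ c321 n (c2f n) /\ ~ c1423 n (c2f n) /\ ~ c3124 n (c2f n).
Proof.
move=> Hn; split; [|split; [|split]].
- case=> i [j [Hij Hj Hi1 Hpj [Hpi Hpe]]].
  have := c2f_inv Hn Hij Hj Hpj.
  move: Hpj Hpi Hpe; rewrite /c2f; repeat (case: eqP => ?); lia.
- case=> i [j [k [Hij Hjk Hk Hkj Hji]]].
  have := c2f_inv Hn Hjk Hk Hkj; have := c2f_inv Hn Hij (k:=j) ltac:(lia) Hji.
  move: Hkj Hji; rewrite /c2f; repeat (case: eqP => ?); lia.
- case=> i [j [k [l [Hij Hjk Hkl Hl [H1 H2 H3]]]]].
  have := c2f_inv Hn (ltn_trans Hjk Hkl) Hl H3.
  have := c2f_inv Hn Hjk (k:=k) ltac:(lia) ltac:(lia); lia.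
- case=> i [j [k [l [Hij Hjk Hkl Hl [H1 H2 H3]]]]].
  have := c2f_inv Hn Hij (k:=j) ltac:(lia) ltac:(lia).
  have := c2f_inv Hn (ltn_trans Hij Hjk) (k:=k) ltac:(lia) ltac:(lia); lia.
Qed.

Fixpoint gen (n : nat) : seq (seq nat) :=
  match n with
  | 0 => [:: [::]]
  | 1 => [:: [:: 0]]
  | (m.+1 as k).+1 => [seq rcons l k | l <- gen k] ++ [seq l ++ [:: k; m] | l <- gen m]
  end.

Definition okl n (l : seq nat) :=
  [/\ size l = n, uniq l, all (fun x => x < n) l & layered n (nth 0 l)].

Lemma nth_rcons_lt (s : seq nat) x t : t < size s -> nth 0 (rcons s x) t = nth 0 s t.
Proof. by move=> H; rewrite nth_rcons H. Qed.

Lemma gen_size n : size (gen n) = fib n /\ size (gen n.+1) = fib n.+1.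
Proof.
elim: n => [//|n [IH1 IH2]]; split => //.
by rewrite /= size_cat !size_map IH1 IH2 /= addnC.
Qed.

Lemma gen_ok n : (forall l, l \in gen n -> okl n l) /\ (forall l, l \in gen n.+1 -> okl n.+1 l).
Proof.
elim: n => [|n [IH1 IH2]].
  split=> l; rewrite inE => /eqP ->; split => //= t Ht; have E : t = 0 by lia.
  by rewrite E.
split => // l; rewrite /= mem_cat => /orP [] /mapP [l' Hl' ->].
- case: (IH2 _ Hl') => Hs Hu Ha Hl.
  split.
  + by rewrite size_rcons Hs.
  + rewrite rcons_uniq Hu andbT; apply/negP => Hin.
    by have := allP Ha _ Hin; lia.
  + rewrite all_rcons; apply/andP; split => //.
    by apply/allP => x /(allP Ha); lia.
  + move=> t Ht; rewrite nth_rcons Hs.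
    case: ltnP => Ht1; first by apply: Hl.
    have -> : t = n.+1 by lia.
    rewrite eqxx; split; lia.
- case: (IH1 _ Hl') => Hs Hu Ha Hl.
  split.
  + rewrite size_cat Hs /=; lia.
  + have Hn1 : n.+1 \notin l' by apply/negP => Hin; have := allP Ha _ Hin; lia.
    have Hn0 : n \notin l' by apply/negP => Hin; have := allP Ha _ Hin; lia.
    rewrite cat_uniq Hu /= (negbTE Hn1) (negbTE Hn0) /= inE; lia.
  + rewrite all_cat; apply/andP; split => /=; last lia.
    by apply/allP => x /(allP Ha); lia.
  + move=> t Ht; rewrite nth_cat Hs.
    case: ltnP => Ht1; first by apply: Hl.
    case: (ltngtP t n.+1) => [H1|H1|->]; [|lia|].
      have -> : t = n by lia.
      rewrite subnn /=; split; lia.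
    rewrite subSnn /=; split; lia.
Qed.

Lemma gen_uniq n : uniq (gen n) /\ uniq (gen n.+1).
Proof.
elim: n => [|n [IH1 IH2]]; split => //.
have E : gen n.+2 = [seq rcons l n.+1 | l <- gen n.+1] ++ [seq l ++ [:: n.+1; n] | l <- gen n] by [].
rewrite E cat_uniq map_inj_uniq; last exact: rcons_injl.
rewrite map_inj_uniq; last first.
  move=> a b E'; have := congr1 size E'; rewrite !size_cat => /addIn Hs.
  by have := congr1 (take (size a)) E'; rewrite take_size_cat // take_size_cat.
rewrite IH1 IH2 /= andbT.
apply/hasPn => x /mapP [l1 _ ->]; apply/negP => /mapP [l2 _ E2].
have := congr1 (last 0) E2; rewrite last_rcons last_cat /=; lia.
Qed.

Lemma surj_l (l : seq nat) n : size l = n -> uniq l -> all (fun x => x < n) l ->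
  forall v, v < n -> v \in l.
Proof.
move=> Hs Hu Ha v Hv; apply/negPn/negP => Hn.
have : size (v :: l) <= size (iota 0 n).
  apply: uniq_leq_size; first by rewrite /= Hn.
  by move=> x; rewrite inE mem_iota => /orP [/eqP ->|/(allP Ha)]; lia.
rewrite size_iota /= Hs; lia.
Qed.

Lemma gen_complete n : (forall l, okl n l -> l \in gen n) /\ (forall l, okl n.+1 l -> l \in gen n.+1).
Proof.
elim: n => [|n [IH1 IH2]].
  split=> l [Hs Hu Ha Hl].
    by case: l Hs Hu Ha Hl.
  case: l Hs Hu Ha Hl => [|x [|]] //= _ _; rewrite andbT => Hx _.
  have -> : x = 0 by lia.
  by rewrite inE.
split => // l [Hs Hu Ha Hl].
case/lastP: l Hs Hu Ha Hl => [//|l' x] Hs Hu Ha Hl.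
rewrite size_rcons in Hs; case: Hs => Hs.
rewrite rcons_uniq in Hu; case/andP: Hu => Hx Hu.
rewrite all_rcons in Ha; case/andP: Ha => Hxn Ha.
have Hlt : forall t, t < n.+1 -> nth 0 (rcons l' x) t = nth 0 l' t.
  by move=> t Ht; rewrite nth_rcons_lt // Hs.
have Hxv := Hl n.+1 ltac:(lia).
rewrite nth_rcons Hs ltnn eqxx in Hxv.
rewrite /= mem_cat; apply/orP.
case: (ltngtP x n.+1) => [Hx1|Hx1|Ex]; [|lia|].
- have Exn : x = n by lia.
  right.
  case/lastP: l' Hs Hx Hu Ha Hl Hlt => [//|l'' y] Hs Hx Hu Ha Hl Hlt.
  rewrite size_rcons in Hs; case: Hs => Hs.
  rewrite rcons_uniq in Hu; case/andP: Hu => Hy Hu.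
  rewrite all_rcons in Ha; case/andP: Ha => Hyn Ha.
  have Hin : n.+1 \in rcons (rcons l'' y) x.
    apply: (surj_l (n := n.+2)) => //.
    - by rewrite !size_rcons Hs.
    - by rewrite !rcons_uniq Hx Hy Hu.
    - by rewrite !all_rcons Hxn Hyn Ha.
  have Ey : y = n.+1.
    move: Hin; rewrite mem_rcons inE mem_rcons inE Exn => /orP [/eqP|/orP [/eqP|Hin]]; [lia|lia|].
    have Ht := nth_index 0 Hin.
    have Hti : index n.+1 l'' < n by rewrite -[X in _ < X]Hs index_mem.
    have := (Hl (index n.+1 l'') ltac:(lia)).1.
    by rewrite !nth_rcons_lt ?size_rcons ?Hs ?Ht //; lia.
  apply/mapP; exists l''; last by rewrite Ey Exn -cats1 -cats1 -catA.
  apply: IH1; split => //.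
  + apply/allP => z Hz; have := allP Ha _ Hz.
    have : z != y by apply: contraNneq Hy => <-.
    have : z != x by apply: contraNneq Hx => <-; rewrite mem_rcons inE Hz orbT.
    lia.
  + move=> t Ht; have := Hl t ltac:(lia).
    by rewrite !nth_rcons_lt ?size_rcons ?Hs //; lia.
- left; apply/mapP; exists l'; last by rewrite Ex.
  apply: IH2; split => //.
  + apply/allP => z Hz; have := allP Ha _ Hz.
    have : z != x by apply: contraNneq Hx => <-.
    lia.
  + by move=> t Ht; rewrite -Hlt //; apply: Hl; lia.
Qed.

Definition tl n (s : 'S_n) : seq nat := [seq val (s k) | k <- enum 'I_n].

Lemma tl_nth n (s : 'S_n) (i : 'I_n) : nth 0 (tl s) i = s i.
Proof. by rewrite /tl (nth_map i) ?size_enum_ord // nth_ord_enum. Qed.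

Lemma tl_size n (s : 'S_n) : size (tl s) = n.
Proof. by rewrite size_map size_enum_ord. Qed.

Lemma tl_uniq n (s : 'S_n) : uniq (tl s).
Proof.
rewrite map_inj_uniq ?enum_uniq // => a b /val_inj; exact: perm_inj.
Qed.

Lemma tl_all n (s : 'S_n) : all (fun x => x < n) (tl s).
Proof. apply/allP => x /mapP [k _ ->]; exact: ltn_ord. Qed.

Lemma tl_inj n : injective (@tl n).
Proof.
move=> s1 s2 E; apply/permP => i; apply: val_inj => /=.
by rewrite -(tl_nth s1) E tl_nth.
Qed.

Lemma containsP n (s : 'S_n) p : contains_pattern s p <->
  exists f : 'I_(size p) -> 'I_n, forall a b : 'I_(size p),
    ((a < b) -> f a < f b) /\ ((s (f a) < s (f b)) = (nth 0 p a < nth 0 p b)).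
Proof.
split.
  case/existsP => f /forallP H; exists f => a b.
  move: (H a) => /forallP /(_ b) /andP [/implyP H1 /eqP H2]; by [].
case=> f H; apply/existsP; exists (finfun f).
apply/forallP => a; apply/forallP => b; rewrite !ffunE.
case: (H a b) => H1 H2; rewrite H2 eqxx andbT; exact/implyP.
Qed.

Lemma good_tl n (s : 'S_n) : inj_on n (nth 0 (tl s)) /\ range n (nth 0 (tl s)) /\ surj n (nth 0 (tl s)).
Proof.
split; [|split].
- move=> i j Hi Hj E; apply/eqP; rewrite -(nth_uniq 0 _ _ (tl_uniq s)) ?tl_size //.
  exact/eqP.
- by move=> i Hi; rewrite (tl_nth s (Ordinal Hi)).
- move=> v Hv.
  have Hin : v \in tl s by apply: (surj_l (tl_size s) (tl_uniq s) (tl_all s)).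
  exists (index v (tl s)); first by rewrite -[X in _ < X](tl_size s) index_mem.
  exact: nth_index.
Qed.

Lemma sneq n (s : 'S_n) (a b : 'I_n) : a < b -> nat_of_ord (s a) <> nat_of_ord (s b).
Proof. move=> H E; have Eab := perm_inj (val_inj E); by rewrite Eab ltnn in H. Qed.

Lemma bridge321 n (s : 'S_n) : contains_pattern s [:: 3; 2; 1] <-> c321 n (nth 0 (tl s)).
Proof.
rewrite containsP; split.
- case=> f H.
  pose o0 : 'I_3 := @Ordinal 3 0 erefl.
  pose o1 : 'I_3 := @Ordinal 3 1 erefl.
  pose o2 : 'I_3 := @Ordinal 3 2 erefl.
  case: (H o0 o1) => /(_ erefl) H01 /= E01; have N01 := sneq (s:=s) H01.
  case: (H o1 o2) => /(_ erefl) H12 /= E12; have N12 := sneq (s:=s) H12.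
  have := ltn_ord (f o2).
  exists (f o0), (f o1), (f o2); rewrite !tl_nth; (repeat split); lia.
- case=> i [j [k [Hij Hjk Hk Hkj Hji]]].
  have Hj : j < n by lia.
  have Hi : i < n by lia.
  pose oi := Ordinal Hi; pose oj := Ordinal Hj; pose ok := Ordinal Hk.
  exists (fun a : 'I_3 => nth oi [:: oi; oj; ok] a).
  rewrite (tl_nth s oi) (tl_nth s oj) (tl_nth s ok) in Hkj Hji.
  move=> [[|[|[|a]]] Ha] [[|[|[|b]]] Hb] //=; split => //; lia.
Qed.

Lemma bridge1423 n (s : 'S_n) : contains_pattern s [:: 1; 4; 2; 3] <-> c1423 n (nth 0 (tl s)).
Proof.
rewrite containsP; split.
- case=> f H.
  pose o0 : 'I_4 := @Ordinal 4 0 erefl.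
  pose o1 : 'I_4 := @Ordinal 4 1 erefl.
  pose o2 : 'I_4 := @Ordinal 4 2 erefl.
  pose o3 : 'I_4 := @Ordinal 4 3 erefl.
  case: (H o0 o1) => /(_ erefl) H01 /= E01; have N01 := sneq (s:=s) H01.
  case: (H o1 o2) => /(_ erefl) H12 /= E12; have N12 := sneq (s:=s) H12.
  case: (H o2 o3) => /(_ erefl) H23 /= E23; have N23 := sneq (s:=s) H23.
  case: (H o0 o2) => /(_ erefl) H02 /= E02; have N02 := sneq (s:=s) H02.
  case: (H o1 o3) => /(_ erefl) H13 /= E13; have N13 := sneq (s:=s) H13.
  case: (H o0 o3) => /(_ erefl) H03 /= E03; have N03 := sneq (s:=s) H03.
  have := ltn_ord (f o3).
  exists (f o0), (f o1), (f o2), (f o3); rewrite !tl_nth; (repeat split); lia.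
- case=> i [j [k [l [Hij Hjk Hkl Hl [H1 H2 H3]]]]].
  have Hk : k < n by lia.
  have Hj : j < n by lia.
  have Hi : i < n by lia.
  pose oi := Ordinal Hi; pose oj := Ordinal Hj; pose ok := Ordinal Hk; pose ol := Ordinal Hl.
  exists (fun a : 'I_4 => nth oi [:: oi; oj; ok; ol] a).
  rewrite (tl_nth s oi) (tl_nth s oj) (tl_nth s ok) (tl_nth s ol) in H1 H2 H3.
  move=> [[|[|[|[|a]]]] Ha] [[|[|[|[|b]]]] Hb] //=; split => //; lia.
Qed.

Lemma bridge3124 n (s : 'S_n) : contains_pattern s [:: 3; 1; 2; 4] <-> c3124 n (nth 0 (tl s)).
Proof.
rewrite containsP; split.
- case=> f H.
  pose o0 : 'I_4 := @Ordinal 4 0 erefl.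
  pose o1 : 'I_4 := @Ordinal 4 1 erefl.
  pose o2 : 'I_4 := @Ordinal 4 2 erefl.
  pose o3 : 'I_4 := @Ordinal 4 3 erefl.
  case: (H o0 o1) => /(_ erefl) H01 /= E01; have N01 := sneq (s:=s) H01.
  case: (H o1 o2) => /(_ erefl) H12 /= E12; have N12 := sneq (s:=s) H12.
  case: (H o2 o3) => /(_ erefl) H23 /= E23; have N23 := sneq (s:=s) H23.
  case: (H o0 o2) => /(_ erefl) H02 /= E02; have N02 := sneq (s:=s) H02.
  case: (H o1 o3) => /(_ erefl) H13 /= E13; have N13 := sneq (s:=s) H13.
  case: (H o0 o3) => /(_ erefl) H03 /= E03; have N03 := sneq (s:=s) H03.
  have := ltn_ord (f o3).
  exists (f o0), (f o1), (f o2), (f o3); rewrite !tl_nth; (repeat split); lia.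
- case=> i [j [k [l [Hij Hjk Hkl Hl [H1 H2 H3]]]]].
  have Hk : k < n by lia.
  have Hj : j < n by lia.
  have Hi : i < n by lia.
  pose oi := Ordinal Hi; pose oj := Ordinal Hj; pose ok := Ordinal Hk; pose ol := Ordinal Hl.
  exists (fun a : 'I_4 => nth oi [:: oi; oj; ok; ol] a).
  rewrite (tl_nth s oi) (tl_nth s oj) (tl_nth s ok) (tl_nth s ol) in H1 H2 H3.
  move=> [[|[|[|[|a]]]] Ha] [[|[|[|[|b]]]] Hb] //=; split => //; lia.
Qed.

Lemma bridgeF n (s : 'S_n) : fishburn s <-> ~ fviol n (nth 0 (tl s)).
Proof.
rewrite /fishburn -/(tl s); split.
- move=> /negP Hf [i [j [Hij Hj Hi1 Hpj [Hpi Hpe]]]]; apply: Hf.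
  have Hi : i < n by lia.
  rewrite (tl_nth s (Ordinal Hi)) (tl_nth s (Ordinal Hj)) in Hpj Hpi Hpe.
  apply/existsP; exists (Ordinal Hi); apply/existsP; exists (Ordinal Hj).
  apply/and5P; split => //=; exact/eqP.
- move=> Hf; apply/negP => /existsP [i /existsP [j /and5P [Hij Hi1 Hpj Hpi /eqP Hpe]]].
  apply: Hf; exists i, j; rewrite !tl_nth; split => //.
Qed.

Definition avoidall n (p : nat -> nat) := ~ fviol n p /\ ~ c321 n p /\ ~ c1423 n p /\ ~ c3124 n p.

Lemma avoid_ext n p q : (forall t, t < n -> p t = q t) -> avoidall n q -> avoidall n p.
Proof.
move=> E [Hf [H3 [H14 H31]]]; split; [|split; [|split]].
- case=> i [j [Hij Hj Hi1 Hpj [Hpi Hpe]]]; apply: Hf; exists i, j.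
  rewrite -!E //; try lia; split => //.
- case=> i [j [k [Hij Hjk Hk Hkj Hji]]]; apply: H3; exists i, j, k.
  rewrite -!E //; lia.
- case=> i [j [k [l [Hij Hjk Hkl Hl [H1 H2 H4]]]]]; apply: H14; exists i, j, k, l.
  rewrite -!E //; try lia; split => //.
- case=> i [j [k [l [Hij Hjk Hkl Hl [H1 H2 H4]]]]]; apply: H31; exists i, j, k, l.
  rewrite -!E //; try lia; split => //.
Qed.

Lemma mkperm n (l : seq nat) : size l = n -> uniq l -> all (fun x => x < n) l ->
  exists s : 'S_n, tl s = l.
Proof.
move=> Hs Hu Ha.
have Hn : forall i : 'I_n, nth 0 l i < n.
  move=> i; apply: (allP Ha); apply: mem_nth; rewrite Hs; exact: ltn_ord.
pose f := fun i : 'I_n => Ordinal (Hn i).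
have finj : injective f.
  move=> a b /(congr1 val) /= E; apply: val_inj; apply/eqP.
  by rewrite -(nth_uniq 0 _ _ Hu) ?Hs ?ltn_ord // E.
exists (perm finj).
apply: (@eq_from_nth _ 0); first by rewrite tl_size Hs.
move=> i; rewrite tl_size => Hi.
by rewrite (tl_nth _ (Ordinal Hi)) permE.
Qed.

Definition c1l n := mkseq (c1f n) n.
Definition c2l n := mkseq (c2f n) n.

Lemma cl_ok n (f : nat -> nat) : 3 < n -> (forall i j, i < n -> j < n -> f i = f j -> i = j) ->
  (forall i, i < n -> f i < n) ->
  size (mkseq f n) = n /\ uniq (mkseq f n) /\ all (fun x => x < n) (mkseq f n).
Proof.
move=> Hn Hinj Hr; split; first exact: size_mkseq.
split.
- rewrite /mkseq map_inj_in_uniq ?iota_uniq // => a b; rewrite !mem_iota /= !add0n.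
  exact: Hinj.
- by apply/allP => x /mapP [i]; rewrite mem_iota add0n /= => Hi ->; apply: Hr.
Qed.

Lemma c1l_ok n : 3 < n -> size (c1l n) = n /\ uniq (c1l n) /\ all (fun x => x < n) (c1l n).
Proof.
move=> Hn; apply: cl_ok => //.
  move=> i j Hi Hj; rewrite /c1f; repeat (case: eqP => ?); lia.
move=> i Hi; rewrite /c1f; repeat (case: eqP => ?); lia.
Qed.

Lemma c2l_ok n : 3 < n -> size (c2l n) = n /\ uniq (c2l n) /\ all (fun x => x < n) (c2l n).
Proof.
move=> Hn; apply: cl_ok => //.
  move=> i j Hi Hj; rewrite /c2f; repeat (case: eqP => ?); lia.
move=> i Hi; rewrite /c2f; repeat (case: eqP => ?); lia.
Qed.

Definition pats := [:: [:: 3; 2; 1]; [:: 1; 4; 2; 3]; [:: 3; 1; 2; 4]].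

Lemma inFA n (s : 'S_n) : avoidall n (nth 0 (tl s)) -> s \in Fish_avoid n pats.
Proof.
case=> Hf [H3 [H14 H31]]; rewrite inE; apply/andP; split; first exact/bridgeF.
rewrite /= /avoids andbT; apply/and3P; split; apply/negP;
  [move/bridge321|move/bridge1423|move/bridge3124]; done.
Qed.

Lemma outFA n (s : 'S_n) : s \in Fish_avoid n pats -> good n (nth 0 (tl s)).
Proof.
rewrite inE => /andP [Hfish]; rewrite /= /avoids andbT => /and3P [A1 A2 A3].
have [Hi [Hr Hs]] := good_tl s.
split => //; split => //; split => //; split; first exact/bridgeF.
split; first by rewrite -bridge321; apply/negP.
split; first by rewrite -bridge1423; apply/negP.
by rewrite -bridge3124; apply/negP.
Qed.

Theorem mainTheorem13 (n : nat) : (4 <= n)%N ->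
  #|Fish_avoid n [:: [:: 3; 2; 1]; [:: 1; 4; 2; 3]; [:: 3; 1; 2; 4]]| = fib n + 2.
Proof.
move=> Hn; rewrite -/pats cardE.
set E := enum _.
have Hu1 : uniq (map (@tl n) E) by rewrite map_inj_uniq ?enum_uniq //; exact: tl_inj.
set T := gen n ++ [:: c1l n; c2l n].
have [Hc1s [Hc1u Hc1a]] := c1l_ok Hn.
have [Hc2s [Hc2u Hc2a]] := c2l_ok Hn.
have Hnth1 : forall t, t < n -> nth 0 (c1l n) t = c1f n t by move=> t Ht; rewrite nth_mkseq.
have Hnth2 : forall t, t < n -> nth 0 (c2l n) t = c2f n t by move=> t Ht; rewrite nth_mkseq.
have Hn0 : 0 < n by lia.
have Hgen1 : c1l n \notin gen n.
  apply/negP => /((gen_ok n).1) [_ _ _ L].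
  have := (L 0 Hn0).1; rewrite Hnth1 // /c1f /=; lia.
have Hgen2 : c2l n \notin gen n.
  apply/negP => /((gen_ok n).1) [_ _ _ L].
  have := (L 0 Hn0).1; rewrite Hnth2 // /c2f /=; lia.
have Hu2 : uniq T.
  rewrite cat_uniq (gen_uniq n).1 /= (negbTE Hgen1) (negbTE Hgen2) /= inE andbT.
  apply/negP => /eqP E'.
  have := Hnth1 0 Hn0; rewrite E' Hnth2 // /c1f /c2f /=; lia.
have Heq : map (@tl n) E =i T.
  move=> l; apply/mapP/idP.
  - case=> s; rewrite mem_enum => /outFA G ->.
    rewrite mem_cat; case: (charA G Hn) => [L|[H1|H2]].
    + apply/orP; left; apply: (gen_complete n).1.
      split; [exact: tl_size|exact: tl_uniq|exact: tl_all|exact: L].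
    + apply/orP; right; rewrite inE; apply/orP; left; apply/eqP.
      apply: (@eq_from_nth _ 0); first by rewrite tl_size Hc1s.
      by move=> t; rewrite tl_size => Ht; rewrite Hnth1 // H1.
    + apply/orP; right; rewrite !inE; apply/orP; right; apply/eqP.
      apply: (@eq_from_nth _ 0); first by rewrite tl_size Hc2s.
      by move=> t; rewrite tl_size => Ht; rewrite Hnth2 // H2.
  - rewrite mem_cat => /orP [Hg|].
      have [Hs Hu Ha L] := (gen_ok n).1 _ Hg.
      have [s Es] := mkperm Hs Hu Ha.
      exists s => //; rewrite mem_enum; apply: inFA; rewrite Es; exact: layered_ok.
    rewrite !inE => /orP [] /eqP ->.
      have [s Es] := mkperm Hc1s Hc1u Hc1a.
      exists s => //; rewrite mem_enum; apply: inFA.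
      apply: (avoid_ext (q := c1f n)); last exact: c1f_ok.
      by move=> t Ht; rewrite Es Hnth1.
    have [s Es] := mkperm Hc2s Hc2u Hc2a.
    exists s => //; rewrite mem_enum; apply: inFA.
    apply: (avoid_ext (q := c2f n)); last exact: c2f_ok.
    by move=> t Ht; rewrite Es Hnth2.
rewrite -(size_map (@tl n)) (perm_size (uniq_perm Hu1 Hu2 Heq)) size_cat (gen_size n).1.
by [].
Qed.
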